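(* Let $G$ be a graph, $t\in\mathbb N$, and let $I_t=I_t^{(\mathcal P)}(G)$ for $\mathcal P\in\{push,pull,pp\}$. Then $$\mathrm{Var}\big[|I_{t+1}|\,\big|\,I_t\big]\le\mathbb E\big[|I_{t+1}|\,\big|\,I_t\big].$$
   Context: Rumour spreading protocols on a graph $G$, synchronous rounds, each message transmission succeeding independently with probability $q\in(0,1]$. push: every informed vertex chooses a neighbour independently and uniformly at random (iuar) and informs it (if the transmission succeeds). pull: every uninformed vertex chooses a neighbour iuar; if it is informed and transmission succeeds, the asking vertex becomes informed. push\&pull (pp): every vertex chooses a neighbour iuar; if one of the two is informed (and the transmission succeeds) both become informed. $I_t^{(\mathcal P)}(G)$ denotes the set of vertices informed at the beginning of round $t$ under protocol $\mathcal P$. *)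

(* Defs.v *)
From mathcomp Require Import all_boot all_order all_algebra.
Unset Implicit Arguments. Unset Printing Implicit Defensive.
Import Order.TTheory GRing.Theory Num.Theory.
Local Open Scope ring_scope.

Inductive protocol := Push | Pull | PushPull.

Section Round.
Variables (R : realFieldType) (V : finType) (adj : rel V) (q : R).

Definition nbhd (v : V) : {set V} := [set u | adj v u].

(* Outcome of one round: every vertex v picks a contact (c v), and each
   vertex's message transmission (the one associated with its call) succeeds
   iff b v.  Isolated vertices (no neighbours) "pick" themselves, which has
   no effect. *)
Definition outcome := ({ffun V -> V} * {ffun V -> bool})%type.

Definition pick_prob (v u : V) : R :=
  if #|nbhd v| == 0%N then (u == v)%:R
  else (u \in nbhd v)%:R / (#|nbhd v|)%:R.

Definition succ_prob (b : bool) : R := if b then q else 1 - q.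

Definition weight (w : outcome) : R :=
  \prod_(v : V) (pick_prob v (w.1 v) * succ_prob (w.2 v)).

Definition next_informed (P : protocol) (S : {set V}) (w : outcome) : {set V} :=
  let c := w.1 in let b := w.2 in
  match P with
  | Push => S :|: [set u | [exists v in S, [&& adj v u, c v == u & b v]]]
  | Pull => S :|: [set u | [&& adj u (c u), c u \in S & b u]]
  | PushPull => S :|: [set u | [&& adj u (c u), c u \in S & b u]
                        || [exists v in S, [&& adj v u, c v == u & b v]]]
  end.

Definition next_count (P : protocol) (S : {set V}) (w : outcome) : R :=
  (#|next_informed P S w|)%:R.

Definition Exp (X : outcome -> R) : R := \sum_(w : outcome) weight w * X w.
Definition Var (X : outcome -> R) : R :=
  \sum_(w : outcome) weight w * (X w - Exp X) ^+ 2.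

End Round.

(* Main.v *)
Require Import Defs.
From mathcomp Require Import all_boot all_order all_algebra ring.
Import Order.TTheory GRing.Theory Num.Theory.
Local Open Scope ring_scope.

Lemma pick_ge0 (R : realFieldType) (V : finType) (adj : rel V) v u :
  0 <= pick_prob R V adj v u.
Proof.
rewrite /pick_prob; case: ifP => _; first by rewrite ler0n.
by rewrite divr_ge0 ?ler0n.
Qed.

Lemma pick_sum (R : realFieldType) (V : finType) (adj : rel V) v :
  \sum_u pick_prob R V adj v u = 1.
Proof.
rewrite /pick_prob; case: eqP => hn.
  rewrite (bigD1 v) //= eqxx big1 ?addr0 // => u /negPf ->; by [].
rewrite -mulr_suml -natr_sum.
have -> : (\sum_(i : V) nat_of_bool (i \in nbhd V adj v))%N = #|nbhd V adj v|.
  by rewrite -sum1_card [RHS]big_mkcond /=; apply: eq_bigr => i _; case: (i \in _).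
by rewrite divff // pnatr_eq0; apply/eqP.
Qed.

Lemma succ_ge0 (R : realFieldType) (q : R) b : 0 <= q -> q <= 1 -> 0 <= succ_prob R q b.
Proof. by move=> h0 h1; case: b => //=; rewrite subr_ge0. Qed.

Lemma succ_sum (R : realFieldType) (q : R) : \sum_b succ_prob R q b = 1.
Proof. by rewrite big_bool /= addrC subrK. Qed.

Lemma prodM (R : comPzRingType) (I : finType) (F G : I -> R) :
  \prod_i (F i * G i) = (\prod_i F i) * \prod_i G i.
Proof. exact: big_split. Qed.

Lemma exp_prod (R : realFieldType) (V : finType) (adj : rel V) (q : R)
  (h : V -> V -> bool -> R) :
  Exp R V adj q (fun w => \prod_v h v (w.1 v) (w.2 v)) =
  \prod_v \sum_a \sum_b (pick_prob R V adj v a * succ_prob R q b * h v a b).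
Proof.
rewrite /Exp /weight.
rewrite (eq_bigr (fun w : outcome V => \prod_v (pick_prob R V adj v (w.1 v) * succ_prob R q (w.2 v) * h v (w.1 v) (w.2 v)))); last first.
  by move=> w _; rewrite [RHS]prodM.
rewrite -(pair_bigA _ (fun (f : {ffun V -> V}) (g : {ffun V -> bool}) =>
   \prod_v (pick_prob R V adj v (f v) * succ_prob R q (g v) * h v (f v) (g v)))) /=.
rewrite (bigA_distr_bigA (fun v a => \sum_b pick_prob R V adj v a * succ_prob R q b * h v a b)).
apply: eq_bigr => f _.
by rewrite (bigA_distr_bigA (fun v b => pick_prob R V adj v (f v) * succ_prob R q b * h v (f v) b)).
Qed.

Lemma sum_weight (R : realFieldType) (V : finType) (adj : rel V) (q : R) :
  \sum_w weight R V adj q w = 1.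
Proof.
have := exp_prod R V adj q (fun _ _ _ => 1).
rewrite /Exp /= => h.
have -> : \sum_w weight R V adj q w = \sum_w weight R V adj q w * \prod_(v : V) (1 : R).
  by apply: eq_bigr => w _; rewrite big1 ?mulr1.
rewrite h; apply: big1 => v _.
under eq_bigr do under eq_bigr do rewrite mulr1.
under eq_bigr do rewrite -mulr_sumr succ_sum mulr1.
exact: pick_sum.
Qed.

Lemma eq_Exp (R : realFieldType) (V : finType) (adj : rel V) (q : R) X Y :
  (forall w, X w = Y w) -> Exp R V adj q X = Exp R V adj q Y.
Proof. by move=> h; apply: eq_bigr => w _; rewrite h. Qed.
Arguments eq_Exp {R V adj q} X Y.

Lemma ExpD (R : realFieldType) (V : finType) (adj : rel V) (q : R) X Y :
  Exp R V adj q (fun w => X w + Y w) = Exp R V adj q X + Exp R V adj q Y.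
Proof. by rewrite /Exp -big_split; apply: eq_bigr => w _; rewrite mulrDr. Qed.

Lemma ExpN (R : realFieldType) (V : finType) (adj : rel V) (q : R) X :
  Exp R V adj q (fun w => - X w) = - Exp R V adj q X.
Proof. by rewrite /Exp -sumrN; apply: eq_bigr => w _; rewrite mulrN. Qed.

Lemma ExpZ (R : realFieldType) (V : finType) (adj : rel V) (q : R) c X :
  Exp R V adj q (fun w => c * X w) = c * Exp R V adj q X.
Proof. by rewrite /Exp mulr_sumr; apply: eq_bigr => w _; rewrite mulrCA. Qed.

Lemma ExpC (R : realFieldType) (V : finType) (adj : rel V) (q : R) c :
  Exp R V adj q (fun w => c) = c.
Proof. by rewrite /Exp -mulr_suml sum_weight mul1r. Qed.

Lemma Exp_sum (R : realFieldType) (V : finType) (adj : rel V) (q : R)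
  (I : finType) (f : I -> outcome V -> R) :
  Exp R V adj q (fun w => \sum_i f i w) = \sum_i Exp R V adj q (f i).
Proof.
rewrite /Exp; under eq_bigr do rewrite mulr_sumr.
exact: exchange_big.
Qed.

Lemma Var_alt (R : realFieldType) (V : finType) (adj : rel V) (q : R) X :
  Var R V adj q X = Exp R V adj q (fun w => X w ^+ 2) - Exp R V adj q X ^+ 2.
Proof.
rewrite /Var.
set m := Exp R V adj q X.
have -> : \sum_w weight R V adj q w * (X w - m) ^+ 2 =
   Exp R V adj q (fun w => X w ^+ 2 + (- (m *+ 2) * X w + m ^+ 2)).
  by apply: eq_bigr => w _; congr (_ * _); rewrite sqrrB mulNr mulrnAl; ring.
rewrite ExpD ExpD ExpZ ExpC -/m.
ring.
Qed.

Definition Fp (V : finType) (adj : rel V) (P : protocol) (S : {set V}) (u v a : V) (b : bool) : bool :=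
  let push := [&& v \in S, adj v u, a == u & b] in
  let pull := [&& v == u, adj u a, a \in S & b] in
  match P with Push => push | Pull => pull | PushPull => pull || push end.

Lemma next_char (V : finType) (adj : rel V) (P : protocol) (S : {set V})
   (w : outcome V) u : u \notin S ->
  (u \in next_informed V adj P S w) = [exists v, Fp V adj P S u v (w.1 v) (w.2 v)].
Proof.
move=> uS; case: w => c b /=.
have hpull : [&& adj u (c u), c u \in S & b u] =
    [exists v, [&& v == u, adj u (c v), c v \in S & b v]].
  apply/idP/existsP => [h|[v /and4P [/eqP -> h1 h2 h3]]]; last by rewrite h1 h2 h3.
  by exists u; rewrite eqxx.
case: P => /=; rewrite !inE (negPf uS) /=.
- by apply/existsP/existsP => [[v /andP [vS h]]|[v /and4P [vS h1 h2 h3]]];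
    exists v; rewrite ?vS //= ?h1 ?h2 ?h3.
- exact: hpull.
- rewrite hpull; apply/orP/existsP.
    case=> [/existsP [v h]|/existsP [v /andP [vS h]]]; exists v; first by rewrite h.
    by rewrite vS h orbT.
  by move=> [v /orP [h|h]]; [left|right]; apply/existsP; exists v => //; rewrite ?h.
Qed.

Lemma Fp_disj (V : finType) (adj : rel V) (P : protocol) (S : {set V}) u u' v a b :
  u \notin S -> u' \notin S -> u != u' ->
  ~~ (Fp V adj P S u v a b && Fp V adj P S u' v a b).
Proof.
move=> uS u'S neq; apply/negP; case: P => /=.
- by case/andP => /and4P [_ _ /eqP -> _] /and4P [_ _ /eqP h _]; rewrite h eqxx in neq.
- by case/andP => /and4P [/eqP -> _ _ _] /and4P [/eqP h _ _ _]; rewrite h eqxx in neq.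
- case/andP => /orP [] /and4P [h1 h2 h3 h4] /orP [] /and4P [k1 k2 k3 k4].
  + by move: h1 k1 => /eqP -> /eqP h; rewrite h eqxx in neq.
  + by move: h1 => /eqP h; rewrite h (negPf uS) in k1.
  + by move: k1 => /eqP e; rewrite e (negPf u'S) in h1.
  + by move: h3 k3 => /eqP -> /eqP h; rewrite h eqxx in neq.
Qed.

Lemma prod_nat_bool (R : realFieldType) (I : finType) (f : I -> bool) :
  \prod_i ((f i)%:R : R) = ([forall i, f i])%:R.
Proof.
case: (boolP [forall i, f i]) => [/forallP h|/forallPn [v hv]].
  by rewrite big1 // => i _; rewrite h.
by rewrite (bigD1 v) //= (negPf hv) mul0r.
Qed.

Lemma natr_negb (R : realFieldType) (e : bool) : ((~~ e)%:R : R) = 1 - e%:R.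
Proof. by case: e; rewrite /= ?subrr ?subr0. Qed.

Definition Yf (V : finType) (adj : rel V) (P : protocol) (S : {set V}) (R : realFieldType) u
   (w : outcome V) : R := \prod_v ((~~ Fp V adj P S u v (w.1 v) (w.2 v))%:R : R).

Lemma Z_Y (R : realFieldType) (V : finType) (adj : rel V) (P : protocol) (S : {set V})
   (w : outcome V) u : u \notin S ->
  ((u \in next_informed V adj P S w)%:R : R) = 1 - Yf V adj P S R u w.
Proof.
move=> uS; rewrite next_char // /Yf prod_nat_bool -negb_exists.
by case: existsP; rewrite /= ?subrr ?subr0.
Qed.

Lemma coord_ineq (R : realFieldType) (T : finType) (pi : T -> R) (F G : T -> bool) :
  (forall t, 0 <= pi t) -> \sum_t pi t = 1 -> (forall t, ~~ (F t && G t)) ->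
  0 <= \sum_t pi t * ((~~ F t)%:R * (~~ G t)%:R) <=
     (\sum_t pi t * (~~ F t)%:R) * (\sum_t pi t * (~~ G t)%:R).
Proof.
move=> pi0 pi1 dj; apply/andP; split.
  by apply: sumr_ge0 => t _; rewrite mulr_ge0 // mulr_ge0 // ler0n.
set pF := \sum_t pi t * (F t)%:R; set pG := \sum_t pi t * (G t)%:R.
have pF0 : 0 <= pF by apply: sumr_ge0 => t _; rewrite mulr_ge0 ?ler0n.
have pG0 : 0 <= pG by apply: sumr_ge0 => t _; rewrite mulr_ge0 ?ler0n.
have e1 : \sum_t pi t * ((~~ F t)%:R * (~~ G t)%:R) = 1 - pF - pG.
  have key : forall t, pi t * ((~~ F t)%:R * (~~ G t)%:R) = pi t - pi t * (F t)%:R - pi t * (G t)%:R.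
    move=> t; move: (dj t); case: (F t); case: (G t) => //= _;
    rewrite ?mulr1 ?mulr0 ?subr0 ?subrr ?sub0r //.
  by rewrite (eq_bigr _ (fun t _ => key t)) !sumrB pi1.
have e2 : forall H : T -> bool, \sum_t pi t * (~~ H t)%:R = 1 - \sum_t pi t * (H t)%:R.
  move=> H; have key : forall t, pi t * (~~ H t)%:R = pi t - pi t * (H t)%:R.
    by move=> t; case: (H t); rewrite /= ?mulr1 ?mulr0 ?subr0 ?subrr.
  by rewrite (eq_bigr _ (fun t _ => key t)) sumrB pi1.
rewrite e1 !e2 -/pF -/pG.
have : 0 <= pF * pG by apply: mulr_ge0.
by move=> h; rewrite -subr_ge0; have -> : (1 - pF) * (1 - pG) - (1 - pF - pG) = pF * pG by ring.
Qed.

Lemma S_sub (V : finType) (adj : rel V) (P : protocol) (S : {set V}) w u :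
  u \in S -> u \in next_informed V adj P S w.
Proof. by move=> uS; case: P; rewrite /= inE uS. Qed.

Lemma exp_prod_nonneg (R : realFieldType) (V : finType) (adj : rel V) (q : R) v :
  \sum_a \sum_b pick_prob R V adj v a * succ_prob R q b = 1.
Proof.
under eq_bigr do rewrite -mulr_sumr succ_sum mulr1.
exact: pick_sum.
Qed.

Lemma cov_le (R : realFieldType) (V : finType) (adj : rel V) (q : R)
    (hq0 : 0 <= q) (hq1 : q <= 1) (P : protocol) (S : {set V}) u u' :
  u != u' ->
  Exp R V adj q (fun w => (u \in next_informed V adj P S w)%:R * (u' \in next_informed V adj P S w)%:R)
  <= Exp R V adj q (fun w => (u \in next_informed V adj P S w)%:R) *
     Exp R V adj q (fun w => (u' \in next_informed V adj P S w)%:R).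
Proof.
move=> neq.
case uS: (u \in S).
  rewrite (eq_Exp _ (fun w => (u' \in next_informed V adj P S w)%:R)); last first.
    by move=> w; rewrite S_sub // mul1r.
  rewrite [X in _ <= X * _](eq_Exp _ (fun w => 1)); last by move=> w; rewrite S_sub.
  by rewrite ExpC mul1r.
case u'S: (u' \in S).
  rewrite (eq_Exp _ (fun w => (u \in next_informed V adj P S w)%:R)); last first.
    by move=> w; rewrite (S_sub _ _ _ _ _ u') // mulr1.
  rewrite [X in _ <= _ * X](eq_Exp _ (fun w => 1)); last by move=> w; rewrite S_sub.
  by rewrite ExpC mulr1.
have nuS : u \notin S by rewrite uS.
have nu'S : u' \notin S by rewrite u'S.
set Y := Yf V adj P S R u; set Y' := Yf V adj P S R u'.
rewrite (eq_Exp _ (fun w => 1 + (- Y w + (- Y' w + Y w * Y' w)))); last first.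
  by move=> w; rewrite !Z_Y //; rewrite /Y /Y'; ring.
rewrite [X in _ <= X * _](eq_Exp _ (fun w => 1 + - Y w)); last by move=> w; rewrite Z_Y.
rewrite [X in _ <= _ * X](eq_Exp _ (fun w => 1 + - Y' w)); last by move=> w; rewrite Z_Y.
rewrite !ExpD !ExpN !ExpC.
suff h : Exp R V adj q (fun w => Y w * Y' w) <= Exp R V adj q Y * Exp R V adj q Y'.
  rewrite -subr_ge0.
  have -> : (1 - Exp R V adj q Y) * (1 - Exp R V adj q Y') -
    (1 + (- Exp R V adj q Y + (- Exp R V adj q Y' + Exp R V adj q (fun w => Y w * Y' w)))) =
    Exp R V adj q Y * Exp R V adj q Y' - Exp R V adj q (fun w => Y w * Y' w) by ring.
  by rewrite subr_ge0.
rewrite (eq_Exp _ (fun w => \prod_v (((~~ Fp V adj P S u v (w.1 v) (w.2 v))%:R : R) *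
                                      (~~ Fp V adj P S u' v (w.1 v) (w.2 v))%:R))); last first.
  by move=> w; rewrite prodM.
rewrite /Y /Y' /Yf.
rewrite (exp_prod R V adj q (fun v a b => ((~~ Fp V adj P S u v a b)%:R : R) * (~~ Fp V adj P S u' v a b)%:R)).
rewrite (exp_prod R V adj q (fun v a b => ((~~ Fp V adj P S u v a b)%:R : R))).
rewrite (exp_prod R V adj q (fun v a b => ((~~ Fp V adj P S u' v a b)%:R : R))).
rewrite -prodM; apply: ler_prod => v _.
rewrite !pair_bigA /=.
apply: (coord_ineq R (V * bool)%type (fun t => pick_prob R V adj v t.1 * succ_prob R q t.2)
   (fun t => Fp V adj P S u v t.1 t.2) (fun t => Fp V adj P S u' v t.1 t.2)).
- by move=> t; rewrite mulr_ge0 ?pick_ge0 ?succ_ge0.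
- by rewrite -(pair_bigA _ (fun a b => pick_prob R V adj v a * succ_prob R q b)) exp_prod_nonneg.
- by move=> t; apply: Fp_disj.
Qed.

Theorem lemma2p1 (R : realFieldType) (V : finType) (adj : rel V)
    (adj_sym : symmetric adj) (adj_irr : irreflexive adj)
    (q : R) (hq0 : 0 < q) (hq1 : q <= 1)
    (P : protocol) (S : {set V}) :
  Var R V adj q (next_count R V adj P S) <= Exp R V adj q (next_count R V adj P S).
Proof.
have hq0' : 0 <= q by apply: ltW.
set Z := fun (u : V) (w : outcome V) => ((u \in next_informed V adj P S w)%:R : R).
have hc : forall w, next_count R V adj P S w = \sum_u Z u w.
  move=> w; rewrite /next_count /Z -sum1_card natr_sum [LHS]big_mkcond /=.
  by apply: eq_bigr => u _; case: (u \in _).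
rewrite Var_alt.
rewrite (eq_Exp _ (fun w => \sum_u \sum_u' Z u w * Z u' w)); last first.
  by move=> w; rewrite hc expr2 mulr_suml; apply: eq_bigr => u _; rewrite mulr_sumr.
rewrite (eq_Exp _ _ hc) !Exp_sum.
under eq_bigr do rewrite Exp_sum.
rewrite expr2 mulr_suml.
under [X in _ - X]eq_bigr do rewrite mulr_sumr.
rewrite -sumrB; apply: ler_sum => u _.
rewrite -sumrB (bigD1 u) //=.
have hzz : Exp R V adj q (fun w => Z u w * Z u w) = Exp R V adj q (Z u).
  by apply: eq_Exp => w; rewrite /Z; case: (u \in _); rewrite ?mulr1 ?mulr0.
rewrite hzz.
have hrest : \sum_(u' | u' != u) (Exp R V adj q (fun w => Z u w * Z u' w) -
     Exp R V adj q (Z u) * Exp R V adj q (Z u')) <= 0.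
  apply: sumr_le0 => u' hu'; rewrite subr_le0.
  by apply: cov_le => //; rewrite eq_sym.
have hsq : 0 <= Exp R V adj q (Z u) * Exp R V adj q (Z u) by rewrite -expr2 sqr_ge0.
set a := Exp R V adj q (Z u); set r := \sum_(_ | _) _ in hrest *.
rewrite -subr_ge0.
have -> : a - (a - a * a + r) = a * a - r by ring.
by rewrite subr_ge0 (le_trans hrest).
Qed.
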